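(* Consider the system \[ \begin{aligned} \dot S_h(t)&=\beta_h-C_{vh}\frac{I_v(t)}{N_v(t)}S_h(t)-\mu_hS_h(t),\\ \dot I_h(t)&=C_{vh}\frac{I_v(t-\tau)}{N_v(t-\tau)}S_h(t-\tau)-\mu_hI_h(t),\\ \dot S_v(t)&=\beta_v-C_{hv}I_h(t)S_v(t)-\mu_vS_v(t),\\ \dot I_v(t)&=C_{hv}I_h(t)S_v(t)-\mu_vI_v(t), \end{aligned} \] with $N_v=S_v+I_v$ and positive parameters $\beta_h,\beta_v,\mu_h,\mu_v,C_{vh},C_{hv}$. Let $R_0=\sqrt{C_{vh}C_{hv}\beta_h/(\mu_h^2\mu_v)}$. If $R_0>1$, then the unique endemic equilibrium $E^*$ (the unique equilibrium with all components positive) is locally asymptotically stable for any $\tau\ge0$.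
   Context: The phase space is $C_+=\{\varphi\in C([-\tau,0],\mathbb{R}_+^4):\varphi_3(\theta)+\varphi_4(\theta)>0\ \forall\theta\in[-\tau,0]\}$ with the sup-norm. *)

(* Defs.v *)
From Stdlib Require Import Reals.
Open Scope R_scope.

Definition basic_R0 (bh mh mv Cvh Chv : R) : R :=
  sqrt (Cvh * Chv * bh / (mh ^ 2 * mv)).

(* Right-hand sides of the system; the delayed quantities are passed as
   arguments (ivd, nvd, shd stand for I_v(t-tau), N_v(t-tau), S_h(t-tau)). *)
Definition f_Sh (bh mh Cvh : R) (sh sv iv : R) : R :=
  bh - Cvh * (iv / (sv + iv)) * sh - mh * sh.
Definition f_Ih (mh Cvh : R) (ih shd svd ivd : R) : R :=
  Cvh * (ivd / (svd + ivd)) * shd - mh * ih.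
Definition f_Sv (bv mv Chv : R) (ih sv : R) : R :=
  bv - Chv * ih * sv - mv * sv.
Definition f_Iv (mv Chv : R) (ih sv iv : R) : R :=
  Chv * ih * sv - mv * iv.

Definition endemic_equilibrium (bh bv mh mv Cvh Chv : R) (E : R * R * R * R) : Prop :=
  let '(sh, ih, sv, iv) := E in
  0 < sh /\ 0 < ih /\ 0 < sv /\ 0 < iv /\
  f_Sh bh mh Cvh sh sv iv = 0 /\
  f_Ih mh Cvh ih sh sv iv = 0 /\
  f_Sv bv mv Chv ih sv = 0 /\
  f_Iv mv Chv ih sv iv = 0.

Definition cont_from (a : R) (f : R -> R) : Prop :=
  forall t, a <= t -> forall eps, 0 < eps -> exists d, 0 < d /\
    forall s, a <= s -> Rabs (s - t) < d -> Rabs (f s - f t) < eps.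

Definition in_phase_space (tau : R) (Sh Ih Sv Iv : R -> R) : Prop :=
  forall th, -tau <= th <= 0 ->
    0 <= Sh th /\ 0 <= Ih th /\ 0 <= Sv th /\ 0 <= Iv th /\ 0 < Sv th + Iv th.

Definition is_solution (bh bv mh mv Cvh Chv tau : R) (Sh Ih Sv Iv : R -> R) : Prop :=
  cont_from (-tau) Sh /\ cont_from (-tau) Ih /\
  cont_from (-tau) Sv /\ cont_from (-tau) Iv /\
  forall t, 0 < t ->
    derivable_pt_lim Sh t (f_Sh bh mh Cvh (Sh t) (Sv t) (Iv t)) /\
    derivable_pt_lim Ih t
      (f_Ih mh Cvh (Ih t) (Sh (t - tau)) (Sv (t - tau)) (Iv (t - tau))) /\
    derivable_pt_lim Sv t (f_Sv bv mv Chv (Ih t) (Sv t)) /\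
    derivable_pt_lim Iv t (f_Iv mv Chv (Ih t) (Sv t) (Iv t)).

Definition close_to (E : R * R * R * R) (r a b c d : R) : Prop :=
  let '(sh, ih, sv, iv) := E in
  Rabs (a - sh) < r /\ Rabs (b - ih) < r /\ Rabs (c - sv) < r /\ Rabs (d - iv) < r.

(* Local asymptotic stability (Lyapunov stability + local attractivity) of E
   for the delay system with phase space C_+ and the sup-norm. *)
Definition locally_asymptotically_stable (bh bv mh mv Cvh Chv tau : R)
    (E : R * R * R * R) : Prop :=
  (forall eps, 0 < eps -> exists delta, 0 < delta /\
     forall Sh Ih Sv Iv : R -> R,
       is_solution bh bv mh mv Cvh Chv tau Sh Ih Sv Iv ->
       in_phase_space tau Sh Ih Sv Iv ->
       (forall th, -tau <= th <= 0 -> close_to E delta (Sh th) (Ih th) (Sv th) (Iv th)) ->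
       forall t, 0 <= t -> close_to E eps (Sh t) (Ih t) (Sv t) (Iv t))
  /\
  (exists b, 0 < b /\
     forall Sh Ih Sv Iv : R -> R,
       is_solution bh bv mh mv Cvh Chv tau Sh Ih Sv Iv ->
       in_phase_space tau Sh Ih Sv Iv ->
       (forall th, -tau <= th <= 0 -> close_to E b (Sh th) (Ih th) (Sv th) (Iv th)) ->
       forall eps, 0 < eps -> exists T, forall t, T <= t ->
         close_to E eps (Sh t) (Ih t) (Sv t) (Iv t)).

(* Main.v *)
Require Import Defs.
From Stdlib Require Import Reals Lra Psatz Classical.
Open Scope R_scope.

Lemma cont_from_mono a b f : a <= b -> cont_from a f -> cont_from b f.
Proof.
  intros Hab H t Ht eps He. destruct (H t ltac:(lra) eps He) as [d [Hd Hs]].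
  exists d; split; auto. intros s Hs1 Hs2. apply Hs; lra.
Qed.

Lemma cont_from_plus a f g : cont_from a f -> cont_from a g -> cont_from a (fun t => f t + g t).
Proof.
  intros Hf Hg t Ht eps He.
  destruct (Hf t Ht (eps/2) ltac:(lra)) as [d1 [Hd1 H1]].
  destruct (Hg t Ht (eps/2) ltac:(lra)) as [d2 [Hd2 H2]].
  exists (Rmin d1 d2); split. apply Rmin_pos; auto.
  intros s Hs Hsd. pose proof (Rmin_l d1 d2). pose proof (Rmin_r d1 d2).
  specialize (H1 s Hs ltac:(lra)). specialize (H2 s Hs ltac:(lra)).
  replace (f s + g s - (f t + g t)) with ((f s - f t) + (g s - g t)) by ring.
  pose proof (Rabs_triang (f s - f t) (g s - g t)). lra.
Qed.

Lemma cont_from_opp a f : cont_from a f -> cont_from a (fun t => - f t).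
Proof.
  intros Hf t Ht eps He. destruct (Hf t Ht eps He) as [d [Hd H]].
  exists d; split; auto. intros s Hs Hsd.
  replace (- f s - - f t) with (- (f s - f t)) by ring. rewrite Rabs_Ropp; auto.
Qed.

Lemma cont_from_const a c : cont_from a (fun _ => c).
Proof.
  intros t Ht eps He. exists 1; split; [lra|]. intros. replace (c - c) with 0 by ring.
  rewrite Rabs_R0; auto.
Qed.

Lemma cont_from_abs a f : cont_from a f -> cont_from a (fun t => Rabs (f t)).
Proof.
  intros Hf t Ht eps He. destruct (Hf t Ht eps He) as [d [Hd H]].
  exists d; split; auto. intros s Hs Hsd.
  pose proof (Rabs_triang_inv (f s) (f t)). pose proof (Rabs_triang_inv (f t) (f s)).
  rewrite (Rabs_minus_sym (f t)) in H1. specialize (H s Hs Hsd).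
  apply Rabs_def1; [|]; lra.
Qed.

Lemma cont_from_min a f g : cont_from a f -> cont_from a g -> cont_from a (fun t => Rmin (f t) (g t)).
Proof.
  intros Hf Hg t Ht eps He.
  destruct (Hf t Ht eps He) as [d1 [Hd1 H1]].
  destruct (Hg t Ht eps He) as [d2 [Hd2 H2]].
  exists (Rmin d1 d2); split. apply Rmin_pos; auto.
  intros s Hs Hsd. pose proof (Rmin_l d1 d2). pose proof (Rmin_r d1 d2).
  specialize (H1 s Hs ltac:(lra)). specialize (H2 s Hs ltac:(lra)).
  apply Rabs_def2 in H1. apply Rabs_def2 in H2.
  unfold Rmin; destruct (Rle_dec (f s) (g s)); destruct (Rle_dec (f t) (g t));
  apply Rabs_def1; lra.
Qed.

Lemma cont_from_shift a c f : 0 <= c -> cont_from a f -> cont_from a (fun t => f (t + c)).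
Proof.
  intros Hc Hf t Ht eps He. destruct (Hf (t + c) ltac:(lra) eps He) as [d [Hd H]].
  exists d; split; auto. intros s Hs Hsd. apply H. lra.
  replace (s + c - (t + c)) with (s - t) by ring. auto.
Qed.

Lemma cont_pt_from a f : (forall t, continuity_pt f t) -> cont_from a f.
Proof.
  intros Hf t Ht eps He. destruct (Hf t eps He) as [d [Hd H]].
  exists d; split; auto. intros s Hs Hsd.
  destruct (Req_dec s t) as [->|Hne].
  - replace (f t - f t) with 0 by ring. rewrite Rabs_R0; auto.
  - apply (H s). split; [split; auto|]. exact I. simpl. unfold R_dist. auto.
Qed.

Definition bexp (c k : R) (t : R) := c * exp (- k * t).

Lemma bexp_deriv c k t : derivable_pt_lim (bexp c k) t (- k * bexp c k t).
Proof.
  unfold bexp.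
  assert (H : derivable_pt_lim (fun t => exp (- k * t)) t (exp (- k * t) * (- k))).
  { apply (derivable_pt_lim_comp (fun t => - k * t) exp t (- k) (exp (- k * t))).
    - pose proof (derivable_pt_lim_scal id (- k) t 1 (derivable_pt_lim_id t)) as H0.
      rewrite Rmult_1_r in H0. exact H0.
    - apply derivable_pt_lim_exp. }
  replace (- k * (c * exp (- k * t))) with (c * (exp (- k * t) * - k)) by ring.
  apply (derivable_pt_lim_scal (fun t => exp (- k * t)) c t). exact H.
Qed.

Lemma bexp_cont a c k : cont_from a (bexp c k).
Proof.
  apply cont_pt_from. intro t. apply derivable_continuous_pt.
  exists (- k * bexp c k t). apply bexp_deriv.
Qed.

Lemma first_zero (phi : R -> R) T : cont_from 0 phi -> 0 < phi 0 -> 0 < T -> phi T <= 0 ->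
  exists t1, 0 < t1 <= T /\ phi t1 = 0 /\ forall s, 0 <= s < t1 -> 0 < phi s.
Proof.
  intros Hc H0 HT HTn.
  set (E := fun s => 0 <= s <= T /\ forall r, 0 <= r <= s -> 0 < phi r).
  assert (Hb : bound E). { exists T. intros s [Hs _]. lra. }
  assert (He : exists x, E x). { exists 0. split. lra. intros r Hr. replace r with 0 by lra. auto. }
  destruct (completeness E Hb He) as [m [Hub Hlub]].
  assert (Hm0 : 0 <= m). { apply Hub. split. lra. intros r Hr. replace r with 0 by lra. auto. }
  assert (HmT : m <= T). { apply Hlub. intros s [Hs _]. lra. }
  assert (HA : forall s, 0 <= s < m -> 0 < phi s).
  { intros s Hs. destruct (classic (exists e, E e /\ s < e)) as [[e [[He1 He2] Hse]]|Hn].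
    - apply He2. lra.
    - exfalso. assert (m <= s). { apply Hlub. intros e Hee. destruct (Rle_dec e s); auto.
        exfalso. apply Hn. exists e. split; auto. lra. } lra. }
  assert (HB : 0 <= phi m).
  { destruct (Rle_dec 0 (phi m)) as [|Hlt]; auto. exfalso.
    destruct (Hc m Hm0 (- phi m) ltac:(lra)) as [d [Hd Hs]].
    destruct (Req_dec m 0) as [Hm|Hm]. { rewrite Hm in Hlt. lra. }
    set (s := Rmax 0 (m - d/2)).
    assert (0 <= s < m). { unfold s; unfold Rmax; destruct (Rle_dec 0 (m - d/2)); lra. }
    assert (Rabs (s - m) < d). { unfold s; unfold Rmax; destruct (Rle_dec 0 (m - d/2));
       rewrite Rabs_left; lra. }
    specialize (Hs s ltac:(lra) H1). specialize (HA s H). apply Rabs_def2 in Hs. lra. }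
  assert (HC : phi m <= 0).
  { destruct (Rle_dec (phi m) 0) as [|Hlt]; auto. exfalso.
    destruct (Req_dec m T) as [HmT'|HmT']. { rewrite HmT' in Hlt. lra. }
    destruct (Hc m Hm0 (phi m) ltac:(lra)) as [d [Hd Hs]].
    set (s := Rmin T (m + d/2)).
    assert (m < s <= T). { unfold s; unfold Rmin; destruct (Rle_dec T (m + d/2)); lra. }
    assert (HEs : E s). { split. lra. intros r Hr. destruct (Rlt_dec r m). apply HA; lra.
       assert (Rabs (r - m) < d). { rewrite Rabs_right; unfold s, Rmin in *; destruct (Rle_dec T (m + d/2)); lra. }
       specialize (Hs r ltac:(lra) H1). apply Rabs_def2 in Hs. lra. }
    specialize (Hub s HEs). lra. }
  exists m. split. split; auto. destruct (Req_dec m 0) as [Hm|Hm]; [|lra].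
  rewrite Hm in HB, HC. lra. split. lra. auto.
Qed.

Lemma deriv_pos_contra d t1 l a : derivable_pt_lim d t1 l -> 0 < l -> d t1 = 0 -> a < t1 ->
  (forall s, a <= s < t1 -> 0 < d s) -> False.
Proof.
  intros Hd Hl H0 Ha Hpos.
  destruct (Hd (l/2) ltac:(lra)) as [del Hdel].
  set (h := - Rmin (del/2) ((t1 - a)/2)).
  assert (Hm1 := Rmin_l (del/2) ((t1 - a)/2)). assert (Hm2 := Rmin_r (del/2) ((t1 - a)/2)).
  assert (Hmp : 0 < Rmin (del/2) ((t1 - a)/2)). { apply Rmin_pos. pose proof (cond_pos del). lra. lra. }
  assert (Hh : h <> 0). { unfold h. lra. }
  assert (Hha : Rabs h < del). { unfold h. rewrite Rabs_Ropp, Rabs_right; lra. }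
  specialize (Hdel h Hh Hha). rewrite H0 in Hdel.
  specialize (Hpos (t1 + h) ltac:(unfold h; lra)).
  apply Rabs_def2 in Hdel.
  assert (Hq : (d (t1 + h) - 0) / h < 0).
  { unfold Rdiv. replace (d (t1 + h) - 0) with (d (t1 + h)) by ring.
    apply Rmult_pos_neg; auto. apply Rinv_lt_0_compat. unfold h; lra. }
  lra.
Qed.

Lemma hit_contra f c k t1 l : 0 < c -> 0 < t1 -> derivable_pt_lim f t1 l ->
  (forall s, 0 <= s < t1 -> Rabs (f s) < bexp c k s) ->
  Rabs (f t1) = bexp c k t1 -> f t1 * l + k * (f t1)^2 < 0 -> False.
Proof.
  intros Hc Ht Hf Hbef Heq Hneg.
  assert (Hb : 0 < bexp c k t1). { unfold bexp. pose proof (exp_pos (- k * t1)). nra. }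
  destruct (Rle_dec 0 (f t1)) as [Hp|Hn].
  - rewrite Rabs_right in Heq by lra.
    apply (deriv_pos_contra (fun t => bexp c k t - f t) t1 (- k * bexp c k t1 - l) 0).
    + apply derivable_pt_lim_minus. apply bexp_deriv. auto.
    + rewrite <- Heq. nra.
    + simpl. lra.
    + auto.
    + intros s Hs. specialize (Hbef s Hs). apply Rabs_def2 in Hbef. simpl. lra.
  - rewrite Rabs_left in Heq by lra.
    apply (deriv_pos_contra (fun t => bexp c k t + f t) t1 (- k * bexp c k t1 + l) 0).
    + apply derivable_pt_lim_plus. apply bexp_deriv. auto.
    + assert (f t1 = - bexp c k t1) by lra. rewrite H in Hneg. nra.
    + simpl. lra.
    + auto.
    + intros s Hs. specialize (Hbef s Hs). apply Rabs_def2 in Hbef. simpl. lra.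
Qed.

Lemma barrier2 (x y : R -> R) c1 c2 k :
  0 < c1 -> 0 < c2 -> cont_from 0 x -> cont_from 0 y ->
  Rabs (x 0) < c1 -> Rabs (y 0) < c2 ->
  (forall t1, 0 < t1 ->
     (forall s, 0 <= s < t1 -> Rabs (x s) < bexp c1 k s /\ Rabs (y s) < bexp c2 k s) ->
     Rabs (x t1) <= bexp c1 k t1 -> Rabs (y t1) <= bexp c2 k t1 ->
     (Rabs (x t1) = bexp c1 k t1 -> exists l, derivable_pt_lim x t1 l /\ x t1 * l + k * (x t1)^2 < 0) /\
     (Rabs (y t1) = bexp c2 k t1 -> exists l, derivable_pt_lim y t1 l /\ y t1 * l + k * (y t1)^2 < 0)) ->
  forall t, 0 <= t -> Rabs (x t) < bexp c1 k t /\ Rabs (y t) < bexp c2 k t.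
Proof.
  intros Hc1 Hc2 Hx Hy Hx0 Hy0 Hstep T HT.
  assert (Hb0 : forall c, bexp c k 0 = c). { intro c. unfold bexp. replace (- k * 0) with 0 by ring. rewrite exp_0. ring. }
  set (phi := fun t => Rmin (bexp c1 k t - Rabs (x t)) (bexp c2 k t - Rabs (y t))).
  destruct (classic (Rabs (x T) < bexp c1 k T /\ Rabs (y T) < bexp c2 k T)) as [|Hn]; auto.
  exfalso.
  assert (Hphi0 : 0 < phi 0). { unfold phi. rewrite !Hb0. apply Rmin_glb_lt; lra. }
  assert (HT0 : 0 < T). { destruct (Req_dec T 0) as [->|]; [|lra]. exfalso. apply Hn. rewrite !Hb0. lra. }
  assert (HphiT : phi T <= 0).
  { unfold phi. unfold Rmin. destruct (Rle_dec _ _); destruct (Rlt_dec (Rabs (x T)) (bexp c1 k T));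
    destruct (Rlt_dec (Rabs (y T)) (bexp c2 k T)); try lra; exfalso; apply Hn; split; auto. }
  assert (Hcp : cont_from 0 phi).
  { unfold phi. apply cont_from_min; (apply cont_from_plus; [apply bexp_cont| apply cont_from_opp; apply cont_from_abs; auto]). }
  destruct (first_zero phi T Hcp Hphi0 HT0 HphiT) as [t1 [Ht1 [Hz Hbef]]].
  assert (Hbef' : forall s, 0 <= s < t1 -> Rabs (x s) < bexp c1 k s /\ Rabs (y s) < bexp c2 k s).
  { intros s Hs. specialize (Hbef s Hs). unfold phi in Hbef.
    pose proof (Rmin_l (bexp c1 k s - Rabs (x s)) (bexp c2 k s - Rabs (y s))).
    pose proof (Rmin_r (bexp c1 k s - Rabs (x s)) (bexp c2 k s - Rabs (y s))). lra. }
  unfold phi in Hz.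
  assert (Hle1 : Rabs (x t1) <= bexp c1 k t1 /\ Rabs (y t1) <= bexp c2 k t1).
  { unfold Rmin in Hz; destruct (Rle_dec _ _) in Hz; lra. }
  destruct Hle1 as [Hl1 Hl2].
  destruct (Hstep t1 ltac:(lra) Hbef' Hl1 Hl2) as [Hs1 Hs2].
  unfold Rmin in Hz; destruct (Rle_dec _ _) in Hz.
  - destruct (Hs1 ltac:(lra)) as [l [Hd Hneg]].
    apply (hit_contra x c1 k t1 l Hc1 ltac:(lra) Hd); [intros; apply Hbef'; auto|lra|auto].
  - destruct (Hs2 ltac:(lra)) as [l [Hd Hneg]].
    apply (hit_contra y c2 k t1 l Hc2 ltac:(lra) Hd); [intros; apply Hbef'; auto|lra|auto].
Qed.

Lemma id_x mh Cvh S I V N ih sd svd ivd :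
  N <> 0 -> svd + ivd <> 0 -> Cvh * V * S = mh * I * N ->
  f_Ih mh Cvh ih sd svd ivd =
  -(Cvh * (ivd / (svd + ivd)) + mh) * (ih - I) + Cvh * S * (ivd - V) / N
  - Cvh * S * (ivd / (svd + ivd)) * (svd + ivd - N) / N
  + Cvh * (ivd / (svd + ivd)) * (sd - S + (ih - I)).
Proof.
  intros HN HNd He. unfold f_Ih.
  assert (Hg : ivd / (svd + ivd) * (svd + ivd) = ivd) by (field; auto).
  generalize dependent (ivd / (svd + ivd)). intros g Hg.
  assert (K : forall g, Cvh * g * sd - mh * ih - (-(Cvh * g + mh) * (ih - I) + Cvh * S * (ivd - V) / N
  - Cvh * S * g * (svd + ivd - N) / N + Cvh * g * (sd - S + (ih - I))) =
   ((Cvh * V * S - mh * I * N) + Cvh * S * (g * (svd + ivd) - ivd)) / N).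
  { intro g0. field. auto. }
  specialize (K g). rewrite He, Hg in K.
  replace ((mh * I * N - mh * I * N + Cvh * S * (ivd - ivd)) / N) with 0 in K by (field; auto).
  lra.
Qed.

Lemma id_y mv Chv I Sv V ih sv iv :
  Chv * I * Sv = mv * V ->
  f_Iv mv Chv ih sv iv =
  -(Chv * ih + mv) * (iv - V) + Chv * (Sv + (sv + iv - (Sv + V))) * (ih - I) + Chv * I * (sv + iv - (Sv + V)).
Proof. intros H. unfold f_Iv. nra. Qed.

Lemma alg_x mh Cvh k S N V q K d E e xt gd yd nd om :
  0 < mh -> 0 < Cvh -> 0 < S -> 0 < N -> 0 < V -> 0 < q -> 0 < K -> 0 < d -> 0 < E -> 0 < e ->
  Rabs xt = K * d * e -> 0 <= gd -> gd <= 2 * V / N ->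
  Rabs yd <= q * K * d * E * e -> Rabs nd <= 2 * d * E * e ->
  xt * om <= Rabs xt * (d * E + K * d) * e ->
  E * (Cvh * S / N * q * K + (4 * Cvh * S * (V / N) / N + 2 * Cvh * (V / N))) < (mh - k) * K ->
  xt * (-(Cvh * gd + mh) * xt + Cvh * S * yd / N - Cvh * S * gd * nd / N + Cvh * gd * om)
    + k * xt ^ 2 < 0.
Proof.
  intros Hmh HC HS HN HV Hq HK Hd HE He Hx Hg0 Hg1 Hy Hn Hom HX.
  assert (HX' : E * (Cvh * S / N * q * K + (4 * (Cvh * S / N) * (V / N) + 2 * Cvh * (V / N))) < (mh - k) * K).
  { replace (4 * (Cvh * S / N) * (V / N)) with (4 * Cvh * S * (V / N) / N) by (field; lra). exact HX. }
  clear HX.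
  set (P := Rabs xt) in *.
  assert (HP : 0 < P) by (rewrite Hx; repeat apply Rmult_lt_0_compat; auto).
  assert (Hx2 : xt ^ 2 = P ^ 2). { unfold P. rewrite pow2_abs. auto. }
  assert (Hxy : xt * yd <= P * (q * K * d * E * e)).
  { apply Rle_trans with (Rabs (xt * yd)). apply Rle_abs. rewrite Rabs_mult.
    apply Rmult_le_compat_l; auto. apply Rabs_pos. }
  assert (Hxn : - (xt * nd) <= P * (2 * d * E * e)).
  { apply Rle_trans with (Rabs (xt * nd)). rewrite <- Rabs_Ropp. apply Rle_abs. rewrite Rabs_mult.
    apply Rmult_le_compat_l; auto. apply Rabs_pos. }
  assert (HSN : 0 < Cvh * S / N) by (unfold Rdiv; apply Rmult_lt_0_compat; [nra| apply Rinv_0_lt_compat; auto]).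
  assert (HVN : 0 < V / N) by (unfold Rdiv; apply Rmult_lt_0_compat; [nra| apply Rinv_0_lt_compat; auto]).
  replace (2 * V / N) with (2 * (V / N)) in Hg1 by (unfold Rdiv; ring).
  set (a := Cvh * S / N) in *. set (v := V / N) in *.
  replace (xt * (-(Cvh * gd + mh) * xt + Cvh * S * yd / N - Cvh * S * gd * nd / N + Cvh * gd * om) + k * xt ^ 2)
    with (-(Cvh * gd + mh - k) * xt ^ 2 + a * (xt * yd) + a * gd * (- (xt * nd)) + Cvh * gd * (xt * om))
    by (unfold a; field; lra).
  rewrite Hx2.
  assert (T1 : a * (xt * yd) <= a * (P * (q * K * d * E * e))) by (apply Rmult_le_compat_l; lra).
  assert (T2 : a * gd * (- (xt * nd)) <= a * gd * (P * (2 * d * E * e))) by (apply Rmult_le_compat_l; nra).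
  assert (T2' : a * gd * (P * (2 * d * E * e)) <= a * (2 * v) * (P * (2 * d * E * e))).
  { apply Rmult_le_compat_r. repeat apply Rmult_le_pos; lra. nra. }
  assert (T3 : Cvh * gd * (xt * om) <= Cvh * gd * (P * (d * E + K * d) * e)) by (apply Rmult_le_compat_l; nra).
  assert (T3' : Cvh * gd * (P * d * E * e) <= Cvh * (2 * v) * (P * d * E * e)).
  { apply Rmult_le_compat_r. repeat apply Rmult_le_pos; lra. nra. }
  assert (HPe : P = K * d * e) by auto.
  assert (Goal : -(mh - k) * P ^ 2 + a * (P * (q * K * d * E * e)) + a * (2 * v) * (P * (2 * d * E * e)) + Cvh * (2 * v) * (P * d * E * e) < 0).
  { replace (-(mh - k) * P ^ 2 + a * (P * (q * K * d * E * e)) + a * (2 * v) * (P * (2 * d * E * e)) + Cvh * (2 * v) * (P * d * E * e))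
      with (P * d * e * (E * (a * q * K + (4 * a * v + 2 * Cvh * v)) - (mh - k) * K)) by (rewrite HPe; ring).
    assert (0 < P * d * e) by (repeat apply Rmult_lt_0_compat; auto).
    apply Rmult_pos_neg; auto. lra. }
  assert (Hexp : Cvh * gd * (P * (d * E + K * d) * e) = Cvh * gd * P ^ 2 + Cvh * gd * (P * d * E * e)) by (rewrite HPe; ring).
  nra.
Qed.

Lemma abs_le_inv x a : Rabs x <= a -> - a <= x <= a.
Proof. intros H. unfold Rabs in H. destruct (Rcase_abs x); lra. Qed.

Lemma alg_y Chv mv k I Sv q K d e yt xt nt :
  0 < Chv -> 0 < I -> 0 < Sv -> 0 < q -> 0 < K -> 0 < d -> 0 < e -> e <= 1 ->
  Rabs yt = q * K * d * e -> Rabs xt <= K * d * e -> Rabs nt <= 2 * d * e ->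
  Chv * (Sv + 2 * d) * K + 2 * Chv * I < (Chv * (I - K * d) + mv - k) * q * K ->
  yt * (-(Chv * (I + xt) + mv) * yt + Chv * (Sv + nt) * xt + Chv * I * nt) + k * yt ^ 2 < 0.
Proof.
  intros HC HI HSv Hq HK Hd He He1 Hy Hx Hn HY.
  set (Q := Rabs yt) in *.
  assert (HQ : 0 < Q) by (rewrite Hy; repeat apply Rmult_lt_0_compat; auto).
  assert (Hy2 : yt ^ 2 = Q ^ 2). { unfold Q. rewrite pow2_abs. auto. }
  apply abs_le_inv in Hx. apply abs_le_inv in Hn.
  assert (Hde : d * e <= d) by nra. assert (HKde : K * d * e <= K * d) by nra.
  assert (Hxl : - (K * d) <= xt) by lra.
  assert (Hxyt : (Sv + nt) * xt * yt <= (Sv + 2 * d) * (K * d * e) * Q).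
  { apply Rle_trans with (Rabs ((Sv + nt) * xt * yt)). apply Rle_abs.
    rewrite !Rabs_mult. fold Q. apply Rmult_le_compat_r. lra.
    apply Rmult_le_compat; try apply Rabs_pos. pose proof (Rabs_triang Sv nt). rewrite (Rabs_right Sv) in H by lra.
    assert (Rabs nt <= 2 * d) by (apply Rabs_le; lra). lra.
    apply Rabs_le; lra. }
  assert (Hnyt : nt * yt <= 2 * d * e * Q).
  { apply Rle_trans with (Rabs (nt * yt)). apply Rle_abs. rewrite Rabs_mult. fold Q.
    apply Rmult_le_compat_r. lra. apply Rabs_le; lra. }
  replace (yt * (-(Chv * (I + xt) + mv) * yt + Chv * (Sv + nt) * xt + Chv * I * nt) + k * yt ^ 2)
    with (-(Chv * (I + xt) + mv - k) * yt ^ 2 + Chv * ((Sv + nt) * xt * yt) + Chv * I * (nt * yt)) by ring.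
  rewrite Hy2.
  assert (A1 : -(Chv * (I + xt) + mv - k) * Q ^ 2 <= -(Chv * (I - K * d) + mv - k) * Q ^ 2).
  { assert (0 <= Q^2) by nra. assert (0 <= Chv * (xt + K * d) * Q ^ 2) by (apply Rmult_le_pos; [apply Rmult_le_pos; lra| lra]). lra. }
  assert (Goal : -(Chv * (I - K * d) + mv - k) * Q ^ 2 + Chv * ((Sv + 2 * d) * (K * d * e) * Q) + Chv * I * (2 * d * e * Q) < 0).
  { replace (-(Chv * (I - K * d) + mv - k) * Q ^ 2 + Chv * ((Sv + 2 * d) * (K * d * e) * Q) + Chv * I * (2 * d * e * Q))
      with (Q * d * e * (Chv * (Sv + 2 * d) * K + 2 * Chv * I - (Chv * (I - K * d) + mv - k) * q * K)) by (rewrite Hy; ring).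
    assert (0 < Q * d * e) by (repeat apply Rmult_lt_0_compat; auto). apply Rmult_pos_neg; auto. lra. }
  assert (Chv * ((Sv + nt) * xt * yt) <= Chv * ((Sv + 2 * d) * (K * d * e) * Q)) by (apply Rmult_le_compat_l; lra).
  assert (Chv * I * (nt * yt) <= Chv * I * (2 * d * e * Q)) by (apply Rmult_le_compat_l; nra).
  lra.
Qed.

Lemma barrier1 (x : R -> R) c k :
  0 < c -> cont_from 0 x -> Rabs (x 0) < c ->
  (forall t1, 0 < t1 -> (forall s, 0 <= s < t1 -> Rabs (x s) < bexp c k s) ->
     Rabs (x t1) = bexp c k t1 -> exists l, derivable_pt_lim x t1 l /\ x t1 * l + k * (x t1)^2 < 0) ->
  forall t, 0 <= t -> Rabs (x t) < bexp c k t.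
Proof.
  intros Hc Hx Hx0 Hs t Ht.
  apply (barrier2 x x c c k Hc Hc Hx Hx Hx0 Hx0); auto.
  intros t1 Ht1 Hbef _ _. split; intro Heq; apply Hs; auto; intros s Hs'; apply Hbef; auto.
Qed.

Lemma deriv_sub_const f c t l : derivable_pt_lim f t l -> derivable_pt_lim (fun s => f s - c) t l.
Proof.
  intros H. replace l with (l - 0) by ring.
  apply (derivable_pt_lim_minus f (fct_cte c)); auto. apply derivable_pt_lim_const.
Qed.

Lemma deriv_shift f c t l : derivable_pt_lim f (t + c) l -> derivable_pt_lim (fun s => f (s + c)) t l.
Proof.
  intros H.
  assert (H1 : derivable_pt_lim (fun s => s + c) t 1).
  { replace 1 with (1 + 0) by ring. apply (derivable_pt_lim_plus id (fct_cte c)).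
    apply derivable_pt_lim_id. apply derivable_pt_lim_const. }
  pose proof (derivable_pt_lim_comp (fun s => s + c) f t 1 l H1 H) as H2.
  rewrite Rmult_1_r in H2. exact H2.
Qed.

Lemma exp_le1 k s : 0 < k -> 0 <= s -> exp (- k * s) <= 1.
Proof.
  intros Hk Hs. destruct (Req_dec s 0) as [->|Hn].
  - replace (- k * 0) with 0 by ring. rewrite exp_0. lra.
  - rewrite <- exp_0. left. apply exp_increasing. nra.
Qed.

Lemma exp_ge1 k s : 0 < k -> s <= 0 -> 1 <= exp (- k * s).
Proof.
  intros Hk Hs. pose proof (exp_ineq1_le (- k * s)). nra.
Qed.

Lemma exp_shift k a b : exp (- k * (a - b)) = exp (k * b) * exp (- k * a).
Proof. rewrite <- exp_plus. f_equal. ring. Qed.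

Lemma div_le a b c dd : 0 < b -> 0 < c -> a * c <= dd * b -> a / b <= dd / c.
Proof.
  intros Hb Hc H. unfold Rdiv.
  apply (Rmult_le_reg_r (b * c)). nra.
  replace (a * / b * (b * c)) with (a * c) by (field; lra).
  replace (dd * / c * (b * c)) with (dd * b) by (field; lra). auto.
Qed.

Lemma core (bh bv mh mv Cvh Chv tau S I Sv V q K k d E : R)
  (Sh Ih Svf Ivf : R -> R) :
  0 < mh -> 0 < mv -> 0 < Cvh -> 0 < Chv ->
  0 < S -> 0 < I -> 0 < Sv -> 0 < V -> 0 <= tau ->
  0 < q -> 0 < K -> 0 < k -> 0 < d ->
  bh = mh * (S + I) -> bv = mv * (Sv + V) ->
  Cvh * V * S = mh * I * (Sv + V) -> Chv * I * Sv = mv * V ->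
  exp (k * tau) <= E -> k < mv -> k < mh -> 1 < K -> 1 < q * K ->
  E * (Cvh * S / (Sv + V) * q * K + (4 * Cvh * S * (V / (Sv + V)) / (Sv + V) + 2 * Cvh * (V / (Sv + V)))) < (mh - k) * K ->
  Chv * (Sv + 2 * d) * K + 2 * Chv * I < (Chv * (I - K * d) + mv - k) * q * K ->
  8 * d <= Sv + V -> q * K * d <= V / 2 ->
  is_solution bh bv mh mv Cvh Chv tau Sh Ih Svf Ivf ->
  (forall th, -tau <= th <= 0 -> close_to (S, I, Sv, V) d (Sh th) (Ih th) (Svf th) (Ivf th)) ->
  forall t, 0 <= t ->
   Rabs (Sh t - S) < bexp ((1 + 2 * K) * d) k t /\ Rabs (Ih t - I) < bexp (K * d) k t /\
   Rabs (Svf t - Sv) < bexp ((2 + q * K) * d) k t /\ Rabs (Ivf t - V) < bexp (q * K * d) k t.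
Proof.
  intros Hmh Hmv HCvh HChv HS HI HSv HV Htau Hq HK Hk Hd Hbh Hbv He3 He4 HE Hkmv Hkmh HK1 HqK1 HX HY HN8 HqKd Hsol Hhist.
  destruct Hsol as [cSh [cIh [cSv [cIv Hder]]]].
  assert (Hh : forall th, -tau <= th <= 0 -> Rabs (Sh th - S) < d /\ Rabs (Ih th - I) < d /\
             Rabs (Svf th - Sv) < d /\ Rabs (Ivf th - V) < d).
  { intros th Hth. exact (Hhist th Hth). }
  clear Hhist.
  assert (HE1 : 1 <= E). { pose proof (exp_ineq1_le (k * tau)). nra. }
  assert (HbexpE : forall c t, bexp c k t = c * exp (- k * t)) by (intros; reflexivity).
  assert (Hn : forall t, 0 <= t -> Rabs (Svf t + Ivf t - (Sv + V)) < bexp (2 * d) k t).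
  { apply barrier1. lra.
    - apply cont_from_plus. apply cont_from_plus; apply (cont_from_mono (- tau)); auto; lra.
      apply cont_from_const.
    - destruct (Hh 0 ltac:(lra)) as [_ [_ [h3 h4]]].
      replace (Svf 0 + Ivf 0 - (Sv + V)) with ((Svf 0 - Sv) + (Ivf 0 - V)) by ring.
      pose proof (Rabs_triang (Svf 0 - Sv) (Ivf 0 - V)). lra.
    - intros t1 Ht1 Hbef Heq.
      destruct (Hder t1 Ht1) as [_ [_ [d3 d4]]].
      exists (f_Sv bv mv Chv (Ih t1) (Svf t1) + f_Iv mv Chv (Ih t1) (Svf t1) (Ivf t1)).
      split. apply deriv_sub_const. apply derivable_pt_lim_plus; auto.
      assert (Hpos : 0 < Rabs (Svf t1 + Ivf t1 - (Sv + V))).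
      { rewrite Heq. unfold bexp. pose proof (exp_pos (- k * t1)). nra. }
      assert (0 < (Svf t1 + Ivf t1 - (Sv + V)) ^ 2). { rewrite <- pow2_abs. nra. }
      unfold f_Sv, f_Iv. rewrite Hbv. nra. }
  assert (Hn' : forall s, -tau <= s -> Rabs (Svf s + Ivf s - (Sv + V)) <= 2 * d * exp (- k * s)).
  { intros s Hs. destruct (Rle_dec 0 s).
    - left. apply Hn; auto.
    - destruct (Hh s ltac:(lra)) as [_ [_ [h3 h4]]].
      replace (Svf s + Ivf s - (Sv + V)) with ((Svf s - Sv) + (Ivf s - V)) by ring.
      pose proof (Rabs_triang (Svf s - Sv) (Ivf s - V)). pose proof (exp_ge1 k s Hk ltac:(lra)). nra. }
  assert (Hw : forall c, Rabs (Sh 0 + Ih (0 + tau) - (S + I)) < c -> forall t, 0 <= t ->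
            Rabs (Sh t + Ih (t + tau) - (S + I)) < bexp c k t).
  { intros c Hc0. apply (barrier1 (fun t => Sh t + Ih (t + tau) - (S + I))).
    - pose proof (Rabs_pos (Sh 0 + Ih (0 + tau) - (S + I))). lra.
    - apply cont_from_plus. apply cont_from_plus. apply (cont_from_mono (- tau)); auto; lra.
      apply cont_from_shift; auto. apply (cont_from_mono (- tau)); auto; lra. apply cont_from_const.
    - auto.
    - intros t1 Ht1 Hbef Heq.
      destruct (Hder t1 Ht1) as [d1 _].
      destruct (Hder (t1 + tau) ltac:(lra)) as [_ [d2 _]].
      replace (t1 + tau - tau) with t1 in d2 by ring.
      exists (f_Sh bh mh Cvh (Sh t1) (Svf t1) (Ivf t1) + f_Ih mh Cvh (Ih (t1 + tau)) (Sh t1) (Svf t1) (Ivf t1)).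
      split. apply deriv_sub_const. apply derivable_pt_lim_plus; auto. apply deriv_shift; auto.
      assert (Hpos : 0 < Rabs (Sh t1 + Ih (t1 + tau) - (S + I))).
      { rewrite Heq. unfold bexp. pose proof (exp_pos (- k * t1)). pose proof (Rabs_pos (Sh 0 + Ih (0 + tau) - (S + I))). nra. }
      assert (0 < (Sh t1 + Ih (t1 + tau) - (S + I)) ^ 2). { rewrite <- pow2_abs. nra. }
      unfold f_Sh, f_Ih. rewrite Hbh. nra. }

  assert (HKd : d < K * d) by (clear - Hd HK1; nra).
  assert (HqKd2 : d < q * K * d) by (clear - Hd HqK1; nra).
  assert (Hmain : forall t, 0 <= t -> Rabs (Ih t - I) < bexp (K * d) k t /\ Rabs (Ivf t - V) < bexp (q * K * d) k t).
  { apply (barrier2 (fun t => Ih t - I) (fun t => Ivf t - V)).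
    - apply Rmult_lt_0_compat; auto. - repeat apply Rmult_lt_0_compat; auto.
    - apply cont_from_plus. apply (cont_from_mono (- tau)); auto; lra. apply cont_from_const.
    - apply cont_from_plus. apply (cont_from_mono (- tau)); auto; lra. apply cont_from_const.
    - destruct (Hh 0 ltac:(lra)) as [_ [h2 _]]. lra.
    - destruct (Hh 0 ltac:(lra)) as [_ [_ [_ h4]]]. lra.
    - intros t1 Ht1 Hbef Hl1 Hl2.
      set (e := exp (- k * t1)).
      assert (He0 : 0 < e) by apply exp_pos.
      assert (He1 : e <= 1) by (apply exp_le1; lra).
      assert (HEe : t1 <= tau -> 1 <= E * e).
      { intro Hle. unfold e. apply Rle_trans with (exp (k * tau) * exp (- k * t1)).
        rewrite <- exp_plus. replace (k * tau + - k * t1) with (- k * (t1 - tau)) by ring.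
        apply exp_ge1; lra.
        apply Rmult_le_compat_r. left; apply exp_pos. auto. }
      assert (Hsh : exp (- k * (t1 - tau)) <= E * e).
      { rewrite exp_shift. unfold e. apply Rmult_le_compat_r. left; apply exp_pos. auto. }

      assert (Hts : - tau <= t1 - tau <= t1) by lra.
      set (s := t1 - tau) in *.
      assert (Hyd : Rabs (Ivf s - V) <= q * K * d * (E * e) /\ Rabs (Ivf s - V) <= q * K * d).
      { destruct (Rlt_dec s 0) as [Hs0|Hs0].
        - destruct (Hh s ltac:(lra)) as [_ [_ [_ h4]]].
          assert (HEe' := HEe ltac:(unfold s in Hs0; lra)).
          split; [|lra]. assert (q * K * d <= q * K * d * (E * e)).
          { assert (0 < q * K * d) by (repeat apply Rmult_lt_0_compat; auto).
            clear - HEe' H. nra. } lra.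
        - assert (Hb : Rabs (Ivf s - V) <= q * K * d * exp (- k * s)).
          { destruct (Rlt_dec s t1). left. apply (Hbef s). lra. 
            replace s with t1 by lra. exact Hl2. }
          assert (0 < q * K * d) by (repeat apply Rmult_lt_0_compat; auto).
          pose proof (exp_le1 k s Hk ltac:(lra)).
          split.
          + apply Rle_trans with (1 := Hb). apply Rmult_le_compat_l; lra.
          + apply Rle_trans with (1 := Hb). clear - H H0. nra. }
      assert (Hnd : Rabs (Svf s + Ivf s - (Sv + V)) <= 2 * d * (E * e) /\ Rabs (Svf s + Ivf s - (Sv + V)) <= 2 * d).
      { pose proof (Hn' s ltac:(lra)) as Hb.
        destruct (Rlt_dec s 0) as [Hs0|Hs0].
        - destruct (Hh s ltac:(lra)) as [_ [_ [h3 h4]]].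
          assert (HEe' := HEe ltac:(unfold s in Hs0; lra)).
          replace (Svf s + Ivf s - (Sv + V)) with ((Svf s - Sv) + (Ivf s - V)) by ring.
          pose proof (Rabs_triang (Svf s - Sv) (Ivf s - V)).
          split; [|lra]. assert (2 * d <= 2 * d * (E * e)) by (clear - HEe' Hd; nra). lra.
        - pose proof (exp_le1 k s Hk ltac:(lra)).
          split.
          + apply Rle_trans with (1 := Hb). apply Rmult_le_compat_l; lra.
          + apply Rle_trans with (1 := Hb). clear - Hd H. nra. }
      destruct Hyd as [Hyd1 Hyd2]. destruct Hnd as [Hnd1 Hnd2].
      apply abs_le_inv in Hyd2. pose proof (abs_le_inv _ _ Hnd2) as Hnd3.
      assert (HNd : 0 < Svf s + Ivf s) by lra.
      assert (Hiv : V / 2 <= Ivf s) by lra.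
      split.
      +
        intro Heqx. cbv beta in Heqx |- *.
        destruct (Hder t1 Ht1) as [_ [dI _]].
        fold s in dI.
        exists (f_Ih mh Cvh (Ih t1) (Sh s) (Svf s) (Ivf s)).
        split. apply deriv_sub_const; auto.
        rewrite (id_x mh Cvh S I V (Sv + V) (Ih t1) (Sh s) (Svf s) (Ivf s)); [|lra|lra|auto].
        apply alg_x with (V := V) (q := q) (K := K) (d := d) (E := E) (e := e); auto; try lra.
        * unfold Rdiv. apply Rmult_le_pos; [lra|left; apply Rinv_0_lt_compat; auto].
        * apply div_le; try lra.
          assert (0 <= (3 * V / 2 - Ivf s) * (Sv + V)) by (apply Rmult_le_pos; lra).
          assert (0 <= V * (Svf s + Ivf s - 3 / 4 * (Sv + V))) by (apply Rmult_le_pos; lra).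
          lra.
        * assert (HP : 0 <= Rabs (Ih t1 - I)) by apply Rabs_pos.
          destruct (Rle_dec t1 tau) as [Hp1|Hp2].
          -- destruct (Hh s ltac:(unfold s; lra)) as [h1 _].
             assert (A1 : (Ih t1 - I) * (Sh s - S) <= Rabs (Ih t1 - I) * d).
             { apply Rle_trans with (Rabs ((Ih t1 - I) * (Sh s - S))). apply Rle_abs.
               rewrite Rabs_mult. apply Rmult_le_compat_l; lra. }
             assert (A2 : (Ih t1 - I) * (Ih t1 - I) = Rabs (Ih t1 - I) * (K * d * e)).
             { assert (Hk2 : K * d * e = Rabs (Ih t1 - I)) by (rewrite Heqx; unfold bexp; fold e; ring).
               rewrite Hk2. rewrite <- Rabs_mult. symmetry. apply Rabs_right. apply Rle_ge. apply Rle_0_sqr. }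
             assert (A3 : Rabs (Ih t1 - I) * d <= Rabs (Ih t1 - I) * (d * (E * e))).
             { apply Rmult_le_compat_l; auto. specialize (HEe Hp1). clear - HEe Hd. nra. }
             replace ((Ih t1 - I) * (Sh s - S + (Ih t1 - I))) with ((Ih t1 - I) * (Sh s - S) + (Ih t1 - I) * (Ih t1 - I)) by ring.
             replace (Rabs (Ih t1 - I) * (d * E + K * d) * e) with (Rabs (Ih t1 - I) * (d * (E * e)) + Rabs (Ih t1 - I) * (K * d * e)) by ring.
             lra.
          -- assert (Hw0 : Rabs (Sh 0 + Ih (0 + tau) - (S + I)) < d + K * d * exp (- k * tau)).
             { destruct (Hh 0 ltac:(lra)) as [h1 _].
               destruct (Hbef tau ltac:(lra)) as [h2 _]. cbv beta in h2. unfold bexp in h2.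
               replace (0 + tau) with tau by ring.
               replace (Sh 0 + Ih tau - (S + I)) with ((Sh 0 - S) + (Ih tau - I)) by ring.
               pose proof (Rabs_triang (Sh 0 - S) (Ih tau - I)). lra. }
             pose proof (Hw _ Hw0 s ltac:(unfold s; lra)) as Hws. unfold bexp in Hws.
             replace (s + tau) with t1 in Hws by (unfold s; ring).
             assert (Hom : Rabs (Sh s - S + (Ih t1 - I)) <= (d * E + K * d) * e).
             { replace (Sh s - S + (Ih t1 - I)) with (Sh s + Ih t1 - (S + I)) by ring.
               assert (Hee : exp (- k * tau) * exp (- k * s) = e).
               { unfold e, s. rewrite <- exp_plus. f_equal. ring. }
               assert (d * exp (- k * s) <= d * (E * e)) by (apply Rmult_le_compat_l; lra).
               replace ((d + K * d * exp (- k * tau)) * exp (- k * s)) with (d * exp (- k * s) + K * d * (exp (- k * tau) * exp (- k * s))) in Hws by ring.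
               rewrite Hee in Hws. lra. }
             apply Rle_trans with (Rabs ((Ih t1 - I) * (Sh s - S + (Ih t1 - I)))). apply Rle_abs.
             rewrite Rabs_mult. rewrite Rmult_assoc. apply Rmult_le_compat_l; auto.
      +
        intro Heqy. cbv beta in Heqy |- *.
        destruct (Hder t1 Ht1) as [_ [_ [_ dV]]].
        exists (f_Iv mv Chv (Ih t1) (Svf t1) (Ivf t1)).
        split. apply deriv_sub_const; auto.
        rewrite (id_y mv Chv I Sv V (Ih t1) (Svf t1) (Ivf t1) He4).
        replace (Chv * Ih t1) with (Chv * (I + (Ih t1 - I))) by ring.
        apply alg_y with (q := q) (K := K) (d := d) (e := e); auto.
        pose proof (Hn t1 ltac:(lra)) as Hnt. unfold bexp in Hnt. fold e in Hnt. lra.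
  }

  intros t Ht.
  destruct (Hmain t Ht) as [hx hy].
  assert (Hw0 : Rabs (Sh 0 + Ih (0 + tau) - (S + I)) < d + K * d * exp (- k * tau)).
  { destruct (Hh 0 ltac:(lra)) as [h1 _].
    destruct (Hmain tau Htau) as [h2 _]. unfold bexp in h2.
    replace (0 + tau) with tau by ring.
    replace (Sh 0 + Ih tau - (S + I)) with ((Sh 0 - S) + (Ih tau - I)) by ring.
    pose proof (Rabs_triang (Sh 0 - S) (Ih tau - I)). lra. }
  pose proof (Hw _ Hw0 t Ht) as Hwt. unfold bexp in Hwt.
  pose proof (exp_le1 k tau Hk Htau) as Htau1.
  pose proof (exp_pos (- k * t)) as Hept.
  pose proof (exp_pos (- k * tau)) as Hepta.
  destruct (Hmain (t + tau) ltac:(lra)) as [hx2 _]. unfold bexp in hx2.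
  assert (Hsplit : exp (- k * (t + tau)) = exp (- k * tau) * exp (- k * t)) by (rewrite <- exp_plus; f_equal; ring).
  rewrite Hsplit in hx2.
  pose proof (Hn t Ht) as hn. unfold bexp in hx, hy, hn |- *.
  split; [|split; [auto|split; [|auto]]].
  - replace (Sh t - S) with ((Sh t + Ih (t + tau) - (S + I)) - (Ih (t + tau) - I)) by ring.
    pose proof (Rabs_triang (Sh t + Ih (t + tau) - (S + I)) (- (Ih (t + tau) - I))).
    rewrite Rabs_Ropp in H.
    assert (K * d * (exp (- k * tau) * exp (- k * t)) <= K * d * exp (- k * t)).
    { apply Rmult_le_compat_l. apply Rmult_le_pos; lra. clear - Htau1 Hept. nra. }
    assert ((d + K * d * exp (- k * tau)) * exp (- k * t) <= (d + K * d) * exp (- k * t)).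
    { apply Rmult_le_compat_r. lra. assert (K * d * exp (- k * tau) <= K * d).
      { assert (0 < K * d) by (apply Rmult_lt_0_compat; auto). clear - H1 Htau1. nra. } lra. }
    unfold Rminus at 1. lra.
  - replace (Svf t - Sv) with ((Svf t + Ivf t - (Sv + V)) - (Ivf t - V)) by ring.
    pose proof (Rabs_triang (Svf t + Ivf t - (Sv + V)) (- (Ivf t - V))).
    rewrite Rabs_Ropp in H. unfold Rminus at 1. lra.
Qed.


Definition rels (bh bv mh mv Cvh Chv S I Sv V : R) : Prop :=
  0 < S /\ 0 < I /\ 0 < Sv /\ 0 < V /\ bh = mh * (S + I) /\ bv = mv * (Sv + V) /\
  Cvh * V * S = mh * I * (Sv + V) /\ Chv * I * Sv = mv * V.

Lemma rels_key bh bv mh mv Cvh Chv S I Sv V : 0 < mv -> 0 < Chv ->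
  rels bh bv mh mv Cvh Chv S I Sv V -> Cvh * Chv * S = mh * (Chv * I + mv).
Proof.
  intros Hmv HChv [HS [HI [HSv [HV [H1 [H2 [H3 H4]]]]]]].
  assert (H5 : Chv * I * (Sv + V) = V * (Chv * I + mv)) by nra.
  apply (Rmult_eq_reg_l (I * (Sv + V) * V)); [|apply Rmult_integral_contrapositive; split; [apply Rmult_integral_contrapositive; split|]; lra].
  replace (I * (Sv + V) * V * (Cvh * Chv * S)) with ((Cvh * V * S) * (Chv * I * (Sv + V))) by ring.
  rewrite H3, H5. ring.
Qed.

Lemma rels_unique bh bv mh mv Cvh Chv S I Sv V S' I' Sv' V' :
  0 < mh -> 0 < mv -> 0 < Cvh -> 0 < Chv ->
  rels bh bv mh mv Cvh Chv S I Sv V -> rels bh bv mh mv Cvh Chv S' I' Sv' V' ->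
  S' = S /\ I' = I /\ Sv' = Sv /\ V' = V.
Proof.
  intros Hmh Hmv HC1 HC2 R1 R2.
  pose proof (rels_key _ _ _ _ _ _ _ _ _ _ Hmv HC2 R1) as K1.
  pose proof (rels_key _ _ _ _ _ _ _ _ _ _ Hmv HC2 R2) as K2.
  destruct R1 as [HS [HI [HSv [HV [H1 [H2 [H3 H4]]]]]]].
  destruct R2 as [HS' [HI' [HSv' [HV' [H1' [H2' [H3' H4']]]]]]].
  assert (ES : S + I = S' + I') by (apply (Rmult_eq_reg_l mh); lra).
  assert (EN : Sv + V = Sv' + V') by (apply (Rmult_eq_reg_l mv); lra).
  assert (EI : I' = I).
  { assert (Cvh * Chv * (S + I - I') = mh * (Chv * I' + mv)) by (rewrite ES; replace (S' + I' - I') with S' by ring; auto).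
    assert (HZ : (I' - I) * (Cvh * Chv + mh * Chv) = 0) by nra.
    apply Rmult_integral in HZ. destruct HZ as [HZ|HZ]; [lra|]. nra. }
  subst I'.
  assert (EV : V' = V).
  { assert (V * (Chv * I + mv) = Chv * I * (Sv + V)) by nra.
    assert (V' * (Chv * I + mv) = Chv * I * (Sv' + V')) by nra.
    rewrite <- EN in H0. apply (Rmult_eq_reg_r (Chv * I + mv)); [|nra]. lra. }
  subst V'. repeat split; lra.
Qed.

Lemma endemic_rels bh bv mh mv Cvh Chv sh ih sv iv :
  endemic_equilibrium bh bv mh mv Cvh Chv (sh, ih, sv, iv) -> rels bh bv mh mv Cvh Chv sh ih sv iv.
Proof.
  intros [HS [HI [HSv [HV [F1 [F2 [F3 F4]]]]]]].
  unfold f_Sh, f_Ih, f_Sv, f_Iv in *.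
  assert (Hg : iv / (sv + iv) * (sv + iv) = iv) by (field; lra).
  repeat split; auto; try lra.
  set (g := iv / (sv + iv)) in *.
  assert (Cvh * g * sh * (sv + iv) = mh * ih * (sv + iv)) by (rewrite <- (Rminus_diag_uniq _ _ F2); auto).
  rewrite <- H. replace (Cvh * g * sh * (sv + iv)) with (Cvh * (g * (sv + iv)) * sh) by ring. rewrite Hg. ring.
Qed.

Lemma rels_endemic bh bv mh mv Cvh Chv S I Sv V :
  rels bh bv mh mv Cvh Chv S I Sv V -> endemic_equilibrium bh bv mh mv Cvh Chv (S, I, Sv, V).
Proof.
  intros [HS [HI [HSv [HV [H1 [H2 [H3 H4]]]]]]].
  assert (Hg : Cvh * (V / (Sv + V)) * S = mh * I).
  { replace (Cvh * (V / (Sv + V)) * S) with (Cvh * V * S / (Sv + V)) by (field; lra).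
    rewrite H3. field. lra. }
  unfold endemic_equilibrium, f_Sh, f_Ih, f_Sv, f_Iv.
  repeat split; auto; lra.
Qed.

Lemma rels_exist bh bv mh mv Cvh Chv :
  0 < bh -> 0 < bv -> 0 < mh -> 0 < mv -> 0 < Cvh -> 0 < Chv ->
  1 < basic_R0 bh mh mv Cvh Chv ->
  exists S I Sv V, rels bh bv mh mv Cvh Chv S I Sv V.
Proof.
  intros Hbh Hbv Hmh Hmv HC1 HC2 HR.
  unfold basic_R0 in HR.
  assert (HX : 1 < Cvh * Chv * bh / (mh ^ 2 * mv)).
  { apply sqrt_lt_0_alt. rewrite sqrt_1. auto. }
  assert (HX2 : mh * mv < Cvh * Chv * bh / mh).
  { assert (0 < mh ^ 2 * mv) by (apply Rmult_lt_0_compat; [apply pow_lt|]; lra).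
    apply Rmult_lt_compat_r with (r := mh ^ 2 * mv) in HX; auto.
    replace (Cvh * Chv * bh / (mh ^ 2 * mv) * (mh ^ 2 * mv)) with (Cvh * Chv * bh) in HX by (field; lra).
    apply (Rmult_lt_reg_r mh); auto. replace (Cvh * Chv * bh / mh * mh) with (Cvh * Chv * bh) by (field; lra).
    lra. }
  set (N := bv / mv).
  set (I := (Cvh * Chv * bh / mh - mh * mv) / (Chv * (mh + Cvh))).
  assert (HI : 0 < I). { unfold I. apply Rdiv_lt_0_compat. lra. nra. }
  set (S := mh * (Chv * I + mv) / (Cvh * Chv)).
  assert (HSI : S + I = bh / mh). { unfold S, I. field. repeat split; lra. }
  set (V := Chv * I * N / (Chv * I + mv)).
  set (Sv := mv * N / (Chv * I + mv)).
  assert (HN : 0 < N) by (unfold N; apply Rdiv_lt_0_compat; lra).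
  assert (HCI : 0 < Chv * I + mv) by (pose proof (Rmult_lt_0_compat _ _ HC2 HI); lra).
  assert (HCC : 0 < Cvh * Chv) by (apply Rmult_lt_0_compat; auto).
  exists S, I, Sv, V. unfold rels.
  repeat split.
  - unfold S. apply Rdiv_lt_0_compat; [apply Rmult_lt_0_compat|]; auto.
  - auto.
  - unfold Sv. apply Rdiv_lt_0_compat; [apply Rmult_lt_0_compat|]; auto.
  - unfold V. apply Rdiv_lt_0_compat; auto. apply Rmult_lt_0_compat; auto. apply Rmult_lt_0_compat; auto.
  - rewrite HSI. field. lra.
  - unfold Sv, V, N. field. split; lra.
  - unfold S, V, Sv. field. split; lra.
  - unfold Sv, V. field. lra.
Qed.

Lemma consts (mh mv Cvh Chv S I Sv V tau : R) :
  0 < mh -> 0 < mv -> 0 < Cvh -> 0 < Chv -> 0 < S -> 0 < I -> 0 < Sv -> 0 < V -> 0 <= tau ->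
  Cvh * V * S = mh * I * (Sv + V) -> Chv * I * Sv = mv * V ->
  exists q K k d0 E, 0 < q /\ 0 < K /\ 0 < k /\ 0 < d0 /\ exp (k * tau) <= E /\ k < mv /\ k < mh /\
    1 < K /\ 1 < q * K /\
    E * (Cvh * S / (Sv + V) * q * K + (4 * Cvh * S * (V / (Sv + V)) / (Sv + V) + 2 * Cvh * (V / (Sv + V)))) < (mh - k) * K /\
    forall d, 0 < d -> d <= d0 ->
      Chv * (Sv + 2 * d) * K + 2 * Chv * I < (Chv * (I - K * d) + mv - k) * q * K /\
      8 * d <= Sv + V /\ q * K * d <= V / 2.
Proof.
  intros Hmh Hmv HCvh HChv HS HI HSv HV Htau H3 H4.
  set (N := Sv + V). assert (HN : 0 < N) by (unfold N; lra).
  set (B := Cvh * S / N). assert (HB : 0 < B) by (unfold B; apply Rdiv_lt_0_compat; [apply Rmult_lt_0_compat|]; auto).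
  assert (HBD : B * (Chv * Sv) = mh * mv).
  { unfold B. apply (Rmult_eq_reg_l (V * I)); [|apply Rmult_integral_contrapositive; split; lra].
    replace (V * I * (Cvh * S / N * (Chv * Sv))) with ((Cvh * V * S) * (Chv * I * Sv) / N) by (field; lra).
    rewrite H3, H4. unfold N. field. lra. }
  set (Cs := Chv * I + mv). assert (HCs : mv < Cs) by (unfold Cs; pose proof (Rmult_lt_0_compat _ _ HChv HI); lra).
  set (lam := (Cs + mv) / (2 * Cs)).
  assert (Hlam1 : lam < 1) by (unfold lam; apply (Rmult_lt_reg_r (2 * Cs)); [lra|]; unfold Rdiv; field_simplify; lra).
  assert (Hlam0 : 0 < lam) by (unfold lam; apply Rdiv_lt_0_compat; lra).
  set (q := mh * lam / B). assert (Hq : 0 < q) by (unfold q; apply Rdiv_lt_0_compat; [apply Rmult_lt_0_compat|]; auto).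
  assert (HBq : B * q = mh * lam) by (unfold q; field; lra).
  set (Xs := mh * (1 - lam)). assert (HXs : 0 < Xs) by (unfold Xs; apply Rmult_lt_0_compat; lra).
  assert (HXsm : Xs < mh) by (unfold Xs; nra).
  set (Ys := Cs * q - Chv * Sv).
  assert (HYs : 0 < Ys).
  { unfold Ys. apply (Rmult_lt_reg_l B); auto. rewrite Rmult_0_r.
    replace (B * (Cs * q - Chv * Sv)) with (Cs * (B * q) - B * (Chv * Sv)) by ring.
    rewrite HBq, HBD.
    assert (Cs * (mh * lam) = mh * (Cs + mv) / 2) by (unfold lam; field; lra).
    rewrite H. assert (0 < mh * (Cs - mv)) by (apply Rmult_lt_0_compat; lra). lra. }
  set (c1 := 4 * Cvh * S * (V / N) / N + 2 * Cvh * (V / N)).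
  assert (Hc1 : 0 < c1).
  { unfold c1. assert (0 < V / N) by (apply Rdiv_lt_0_compat; auto).
    assert (0 < 4 * Cvh * S * (V / N) / N) by (unfold Rdiv; repeat apply Rmult_lt_0_compat; try apply Rinv_0_lt_compat; lra).
    pose proof (Rmult_lt_0_compat _ _ HCvh H). lra. }
  set (K := 2 + 2 / q + 4 * c1 / Xs + 4 * Chv * I / Ys).
  assert (Hq2 : 0 < 2 / q) by (apply Rdiv_lt_0_compat; lra).
  assert (Hc1X : 0 < 4 * c1 / Xs) by (apply Rdiv_lt_0_compat; lra).
  assert (HIY : 0 < 4 * Chv * I / Ys) by (apply Rdiv_lt_0_compat; [repeat apply Rmult_lt_0_compat|]; lra).
  assert (HK2 : 2 <= K) by (unfold K; lra).
  assert (HqK : 2 <= q * K).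
  { assert (q * (2 / q) = 2) by (field; lra). unfold K.
    assert (0 <= q * (2 + 4 * c1 / Xs + 4 * Chv * I / Ys)) by (apply Rmult_le_pos; lra). nra. }
  assert (HKc1 : c1 <= Xs * K / 4).
  { assert (Xs * (4 * c1 / Xs) = 4 * c1) by (field; lra). unfold K.
    assert (0 <= Xs * (2 + 2 / q + 4 * Chv * I / Ys)) by (apply Rmult_le_pos; lra). nra. }
  assert (HKY : 4 * Chv * I <= K * Ys).
  { assert (Ys * (4 * Chv * I / Ys) = 4 * Chv * I) by (field; lra). unfold K.
    assert (0 <= Ys * (2 + 2 / q + 4 * c1 / Xs)) by (apply Rmult_le_pos; lra). nra. }
  set (sig := Xs / (4 * mh)). assert (Hsig : 0 < sig) by (unfold sig; apply Rdiv_lt_0_compat; lra).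
  assert (Hsigm : sig * mh = Xs / 4) by (unfold sig; field; lra).
  set (u := sig / ((1 + sig) * (tau + 1))).
  assert (Hu : 0 < u) by (unfold u; apply Rdiv_lt_0_compat; [|apply Rmult_lt_0_compat]; lra).
  set (k := Rmin (Xs / 4) (Rmin (Ys / (8 * q)) (Rmin (mv / 2) u))).
  assert (Hk0 : 0 < k).
  { unfold k. repeat apply Rmin_pos; try exact Hu; apply Rdiv_lt_0_compat; lra. }
  assert (Hk1 : k <= Xs / 4) by apply Rmin_l.
  assert (Hk2 : k <= Ys / (8 * q)) by (eapply Rle_trans; [apply Rmin_r|apply Rmin_l]).
  assert (Hk3 : k <= mv / 2) by (eapply Rle_trans; [apply Rmin_r|]; eapply Rle_trans; [apply Rmin_r|apply Rmin_l]).
  assert (Hk4 : k <= u) by (eapply Rle_trans; [apply Rmin_r|]; eapply Rle_trans; [apply Rmin_r|apply Rmin_r]).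
  set (E := 1 + sig).
  assert (HE : exp (k * tau) <= E).
  { assert (Hkt : k * tau <= sig / (1 + sig)).
    { apply Rle_trans with (u * tau). apply Rmult_le_compat_r; lra.
      unfold u. apply (Rmult_le_reg_r ((1 + sig) * (tau + 1))). apply Rmult_lt_0_compat; lra.
      replace (sig / ((1 + sig) * (tau + 1)) * tau * ((1 + sig) * (tau + 1))) with (sig * tau) by (field; lra).
      replace (sig / (1 + sig) * ((1 + sig) * (tau + 1))) with (sig * (tau + 1)) by (field; lra). nra. }
    pose proof (exp_ineq1_le (- (k * tau))) as Hm.
    assert (Hprod : exp (k * tau) * exp (- (k * tau)) = 1) by (rewrite <- exp_plus; replace (k * tau + - (k * tau)) with 0 by ring; apply exp_0).
    assert (H1s : 1 / (1 + sig) <= 1 + - (k * tau)).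
    { assert (sig / (1 + sig) = 1 - 1 / (1 + sig)) by (field; lra). lra. }
    assert (Hpos : 0 < exp (k * tau)) by apply exp_pos.
    unfold E. apply (Rmult_le_reg_r (1 / (1 + sig))). apply Rdiv_lt_0_compat; lra.
    replace ((1 + sig) * (1 / (1 + sig))) with 1 by (field; lra).
    apply Rle_trans with (exp (k * tau) * exp (- (k * tau))); [|lra].
    apply Rmult_le_compat_l; lra. }
  set (d0 := Rmin (Ys / (8 * Chv * K * q)) (Rmin (Ys / (16 * Chv)) (Rmin (V / (2 * q * K)) (N / 8)))).
  assert (Hd0 : 0 < d0).
  { assert (HKp : 0 < K) by lra.
    assert (0 < 8 * Chv * K * q) by (apply Rmult_lt_0_compat; [apply Rmult_lt_0_compat; [apply Rmult_lt_0_compat|]|]; lra).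
    assert (0 < 2 * q * K) by (apply Rmult_lt_0_compat; [apply Rmult_lt_0_compat|]; lra).
    unfold d0. repeat apply Rmin_pos; apply Rdiv_lt_0_compat; lra. }
  assert (Hd1 : d0 <= Ys / (8 * Chv * K * q)) by apply Rmin_l.
  assert (Hd2 : d0 <= Ys / (16 * Chv)) by (eapply Rle_trans; [apply Rmin_r|apply Rmin_l]).
  assert (Hd3 : d0 <= V / (2 * q * K)) by (eapply Rle_trans; [apply Rmin_r|]; eapply Rle_trans; [apply Rmin_r|apply Rmin_l]).
  assert (Hd4 : d0 <= N / 8) by (eapply Rle_trans; [apply Rmin_r|]; eapply Rle_trans; [apply Rmin_r|apply Rmin_r]).
  exists q, K, k, d0, E.
  split; [auto|]. split; [lra|]. split; [auto|]. split; [auto|]. split; [auto|].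
  split; [lra|]. split; [lra|]. split; [lra|]. split; [lra|].
  split.
  - fold N. fold B. fold c1.
    replace (B * q * K) with (mh * lam * K) by (rewrite <- HBq; ring).
    assert (Hlx : mh * lam + Xs = mh) by (unfold Xs; ring).
    assert (A1 : E * (mh * lam * K + c1) <= (1 + sig) * ((mh * lam + Xs / 4) * K)).
    { unfold E. apply Rmult_le_compat_l; lra. }
    assert (A2 : (1 + sig) * ((mh * lam + Xs / 4) * K) <= (mh * lam + Xs / 2) * K).
    { assert (sig * (mh * lam + Xs / 4) <= Xs / 4).
      { rewrite <- Hsigm. apply Rmult_le_compat_l; lra. }
      assert (0 < K) by lra. nra. }
    assert (A3 : (mh * lam + Xs / 2) * K < (mh - k) * K) by (apply Rmult_lt_compat_r; lra).
    lra.
  - intros d Hd Hdd.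
    assert (B1 : Chv * K * d * q <= Ys / 8).
    { assert (d <= Ys / (8 * Chv * K * q)) by lra.
      apply (Rmult_le_compat_l (8 * Chv * K * q)) in H; [|apply Rmult_le_pos; [apply Rmult_le_pos; [apply Rmult_le_pos|]|]; lra].
      replace (8 * Chv * K * q * (Ys / (8 * Chv * K * q))) with Ys in H by (field; repeat split; lra). lra. }
    assert (B2 : 2 * Chv * d <= Ys / 8).
    { assert (d <= Ys / (16 * Chv)) by lra.
      apply (Rmult_le_compat_l (16 * Chv)) in H; [|lra].
      replace (16 * Chv * (Ys / (16 * Chv))) with Ys in H by (field; lra). lra. }
    assert (B3 : k * q <= Ys / 8).
    { apply (Rmult_le_compat_r q) in Hk2; [|lra].
      replace (Ys / (8 * q) * q) with (Ys / 8) in Hk2 by (field; lra). lra. }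
    split; [|split].
    + assert (Hexp : (Chv * (I - K * d) + mv - k) * q * K - (Chv * (Sv + 2 * d) * K + 2 * Chv * I)
                     = K * (Ys - Chv * K * d * q - k * q - 2 * Chv * d) - 2 * Chv * I) by (unfold Ys, Cs; ring).
      assert (5 * Ys / 8 <= Ys - Chv * K * d * q - k * q - 2 * Chv * d) by lra.
      assert (K * (5 * Ys / 8) <= K * (Ys - Chv * K * d * q - k * q - 2 * Chv * d)) by (apply Rmult_le_compat_l; lra).
      assert (0 < Chv * I) by (apply Rmult_lt_0_compat; lra).
      lra.
    + lra.
    + assert (d <= V / (2 * q * K)) by lra.
      apply (Rmult_le_compat_l (q * K)) in H; [|lra].
      replace (q * K * (V / (2 * q * K))) with (V / 2) in H by (field; lra). lra.
Qed.

Theorem theorem3 (bh bv mh mv Cvh Chv : R) :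
  0 < bh -> 0 < bv -> 0 < mh -> 0 < mv -> 0 < Cvh -> 0 < Chv ->
  1 < basic_R0 bh mh mv Cvh Chv ->
  exists E : R * R * R * R,
    endemic_equilibrium bh bv mh mv Cvh Chv E /\
    (forall E', endemic_equilibrium bh bv mh mv Cvh Chv E' -> E' = E) /\
    (forall tau, 0 <= tau -> locally_asymptotically_stable bh bv mh mv Cvh Chv tau E).
Proof.
  intros Hbh Hbv Hmh Hmv HCvh HChv HR.
  destruct (rels_exist bh bv mh mv Cvh Chv Hbh Hbv Hmh Hmv HCvh HChv HR) as [S [I [Sv [V Hr]]]].
  exists (S, I, Sv, V). split; [apply rels_endemic; auto|]. split.
  - intros [[[sh ih] sv] iv] He. apply endemic_rels in He.
    destruct (rels_unique _ _ _ _ _ _ _ _ _ _ _ _ _ _ Hmh Hmv HCvh HChv Hr He) as [-> [-> [-> ->]]].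
    reflexivity.
  - intros tau Htau.
    pose proof Hr as [HS [HI [HSv [HV [H1 [H2 [H3 H4]]]]]]].
    destruct (consts mh mv Cvh Chv S I Sv V tau Hmh Hmv HCvh HChv HS HI HSv HV Htau H3 H4)
      as [q [K [k [d0 [E [Hq [HK [Hk [Hd0 [HE [Hkmv [Hkmh [HK1 [HqK1 [HX Hd]]]]]]]]]]]]]]].
    set (M := 3 + 2 * K + q * K).
    assert (HM : 0 < M) by (unfold M; nra).
    assert (Core : forall d, 0 < d -> d <= d0 -> forall Sh Ih Svf Ivf,
       is_solution bh bv mh mv Cvh Chv tau Sh Ih Svf Ivf ->
       (forall th, -tau <= th <= 0 -> close_to (S, I, Sv, V) d (Sh th) (Ih th) (Svf th) (Ivf th)) ->
       forall t, 0 <= t -> forall c, M * d <= c ->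
       close_to (S, I, Sv, V) (c * exp (- k * t)) (Sh t) (Ih t) (Svf t) (Ivf t)).
    { intros d Hd0' Hdd Sh Ih Svf Ivf Hsol Hhist t Ht c Hc.
      destruct (Hd d Hd0' Hdd) as [HY [HN8 HqKd]].
      destruct (core bh bv mh mv Cvh Chv tau S I Sv V q K k d E Sh Ih Svf Ivf
                  Hmh Hmv HCvh HChv HS HI HSv HV Htau Hq HK Hk Hd0' H1 H2 H3 H4 HE Hkmv Hkmh HK1 HqK1 HX HY HN8 HqKd Hsol Hhist t Ht)
        as [a1 [a2 [a3 a4]]].
      unfold bexp in *. pose proof (exp_pos (- k * t)) as Hep.
      assert (Hle : forall c', c' <= c -> c' * exp (- k * t) <= c * exp (- k * t)) by (intros; apply Rmult_le_compat_r; lra).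
      assert (0 < q * K) by lra.
      unfold M in Hc.
      simpl. split; [|split; [|split]].
      - eapply Rlt_le_trans; [exact a1|]. apply Hle. nra.
      - eapply Rlt_le_trans; [exact a2|]. apply Hle. nra.
      - eapply Rlt_le_trans; [exact a3|]. apply Hle. nra.
      - eapply Rlt_le_trans; [exact a4|]. apply Hle. nra. }
    split.
    + intros eps Heps.
      set (del := Rmin d0 (eps / M)).
      assert (Hdel : 0 < del) by (apply Rmin_pos; [lra| apply Rdiv_lt_0_compat; lra]).
      exists del. split; auto.
      intros Sh Ih Svf Ivf Hsol Hph Hhist t Ht.
      assert (HMd : M * del <= eps).
      { assert (del <= eps / M) by apply Rmin_r.
        apply (Rmult_le_compat_l M) in H; [|lra]. replace (M * (eps / M)) with eps in H by (field; lra). lra. }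
      pose proof (Core del Hdel (Rmin_l _ _) Sh Ih Svf Ivf Hsol Hhist t Ht (M * del) (Rle_refl _)) as Hc.
      pose proof (exp_le1 k t Hk Ht) as Hexp.
      simpl in Hc |- *.
      assert (M * del * exp (- k * t) <= eps).
      { apply Rle_trans with (M * del * 1). apply Rmult_le_compat_l. nra. auto. lra. }
      destruct Hc as [c1 [c2 [c3 c4]]]. repeat split; lra.
    + exists d0. split; auto.
      intros Sh Ih Svf Ivf Hsol Hph Hhist eps Heps.
      exists (M * d0 / (eps * k)).
      intros t Ht.
      assert (HT0 : 0 < M * d0 / (eps * k)) by (apply Rdiv_lt_0_compat; apply Rmult_lt_0_compat; lra).
      pose proof (Core d0 Hd0 (Rle_refl _) Sh Ih Svf Ivf Hsol Hhist t ltac:(lra) (M * d0) (Rle_refl _)) as Hc.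
      assert (Hsmall : M * d0 * exp (- k * t) < eps).
      { pose proof (exp_ineq1_le (k * t)) as Hx.
        assert (Hprod : exp (k * t) * exp (- k * t) = 1) by (rewrite <- exp_plus; replace (k * t + - k * t) with 0 by ring; apply exp_0).
        assert (Hkt : M * d0 <= eps * (k * t)).
        { apply Rmult_le_compat_l with (r := eps * k) in Ht; [|left; apply Rmult_lt_0_compat; lra].
          replace (eps * k * (M * d0 / (eps * k))) with (M * d0) in Ht by (field; lra).
          lra. }
        assert (HMe : M * d0 < eps * exp (k * t)).
        { assert (eps * (1 + k * t) <= eps * exp (k * t)) by (apply Rmult_le_compat_l; lra). lra. }
        pose proof (exp_pos (- k * t)). pose proof (exp_pos (k * t)).
        apply (Rmult_lt_reg_l (exp (k * t))); auto.
        replace (exp (k * t) * (M * d0 * exp (- k * t))) with (M * d0 * (exp (k * t) * exp (- k * t))) by ring.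
        rewrite Hprod. lra. }
      simpl in Hc |- *.
      destruct Hc as [c1 [c2 [c3 c4]]]. repeat split; lra.
Qed.
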